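(* Let $R$ be a semisimple 2-primal ring. Then $R$ satisfies the complete radical formula, i.e., for every left $R$-module $M$ and every submodule $N$ of $M$, $\langle E_M(N)\rangle=\beta^s_{co}(N)$.
   Context: Rings are associative with identity; modules are unital left modules. $R$ is semisimple if ${}_RR$ is a direct sum of simple submodules; $R$ is 2-primal if its set of nilpotent elements equals its prime radical. A submodule $P$ of $M$ is completely prime if $RM\not\subseteq P$ and for $r\in R$, $m\in M$, $rm\in P$ implies $m\in P$ or $rM\subseteq P$. $\beta^s_{co}(N)$ is the intersection of all completely prime submodules of $M$ containing $N$ ($=M$ if none). $E_M(N)=\{rm: r\in R, m\in M, r^km\in N\text{ for some }k\in\mathbb N\}$ and $\langle E_M(N)\rangle$ is the submodule it generates. *)

(* Defs.v *)
From HB Require Import structures.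
From mathcomp Require Import all_boot all_order all_algebra.
From Stdlib Require Import List.
Set Implicit Arguments. Unset Strict Implicit. Unset Printing Implicit Defensive.
Import GRing.Theory.
Local Open Scope ring_scope.

Definition is_submodule (R : pzRingType) (M : lmodType R) (N : M -> Prop) : Prop :=
  [/\ N 0, (forall x y, N x -> N y -> N (x + y)) & (forall (r : R) x, N x -> N (r *: x))].

Definition gen_submodule (R : pzRingType) (M : lmodType R) (S : M -> Prop) : M -> Prop :=
  fun x => forall N : M -> Prop, is_submodule N -> (forall y, S y -> N y) -> N x.

Definition is_left_ideal (R : pzRingType) (I : R -> Prop) : Prop :=
  [/\ I 0, (forall x y, I x -> I y -> I (x + y)) & (forall r x, I x -> I (r * x))].

Definition is_ideal (R : pzRingType) (I : R -> Prop) : Prop :=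
  is_left_ideal I /\ (forall r x, I x -> I (x * r)).

Definition simple_left_ideal (R : pzRingType) (I : R -> Prop) : Prop :=
  [/\ is_left_ideal I, (exists x, I x /\ x <> 0) &
      (forall J : R -> Prop, is_left_ideal J -> (forall x, J x -> I x) ->
         (forall x, J x -> x = 0) \/ (forall x, I x -> J x))].

(* _R R is the (internal) direct sum of the family of simple left ideals L *)
Definition semisimple_ring (R : pzRingType) : Prop :=
  exists (J : Type) (L : J -> R -> Prop),
    (forall j, simple_left_ideal (L j)) /\
    (forall r : R, exists (s : list J) (x : J -> R),
        NoDup s /\ (forall j, In j s -> L j (x j)) /\
        r = \sum_(j <- s) x j) /\
    (forall (s : list J) (x : J -> R),
        NoDup s -> (forall j, In j s -> L j (x j)) ->
        \sum_(j <- s) x j = 0 -> forall j, In j s -> x j = 0).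

Definition nilpotent_elt (R : pzRingType) (a : R) : Prop := exists n : nat, a ^+ n = 0.

Definition prime_ideal (R : pzRingType) (P : R -> Prop) : Prop :=
  [/\ is_ideal P, ~ P 1 &
      (forall a b, (forall r, P (a * r * b)) -> P a \/ P b)].

Definition prime_radical (R : pzRingType) : R -> Prop :=
  fun a => forall P, prime_ideal P -> P a.

Definition two_primal (R : pzRingType) : Prop :=
  forall a : R, nilpotent_elt a <-> prime_radical a.

Definition completely_prime (R : pzRingType) (M : lmodType R) (P : M -> Prop) : Prop :=
  [/\ is_submodule P,
      (exists (r : R) (m : M), ~ P (r *: m)) &
      (forall (r : R) (m : M), P (r *: m) -> P m \/ (forall m' : M, P (r *: m')))].

Definition beta_co (R : pzRingType) (M : lmodType R) (N : M -> Prop) : M -> Prop :=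
  fun x => forall P, completely_prime P -> (forall y, N y -> P y) -> P x.

Definition E_M (R : pzRingType) (M : lmodType R) (N : M -> Prop) : M -> Prop :=
  fun x => exists (r : R) (m : M) (k : nat), x = r *: m /\ N (r ^+ k *: m).

Definition complete_radical_formula (R : pzRingType) : Prop :=
  forall (M : lmodType R) (N : M -> Prop), is_submodule N ->
    forall x : M, gen_submodule (E_M N) x <-> beta_co N x.

(* Main.v *)
Require Import Defs.
From mathcomp Require Import all_boot all_order all_algebra.
From Stdlib Require List.
From Stdlib Require Import Classical ClassicalEpsilon.
Set Implicit Arguments. Unset Strict Implicit. Unset Printing Implicit Defensive.
Import GRing.Theory.
Local Open Scope ring_scope.

Lemma sum_zero_list (V : zmodType) (T : Type) (s : list T) (F : T -> V) :
  (forall j, List.In j s -> F j = 0) -> \sum_(j <- s) F j = 0.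
Proof.
elim: s => [|a s IH] H; first by rewrite big_nil.
rewrite big_cons H /=; last by left.
rewrite add0r IH // => j Hj; apply: H; by right.
Qed.

Lemma sum_ind (V : zmodType) (T : Type) (s : list T) (i : T) (e : V) :
  List.NoDup s -> List.In i s ->
  \sum_(k <- s) (if excluded_middle_informative (k = i) then e else 0) = e.
Proof.
elim: s => [|a s IH] Hnd Hi; first by case: Hi.
rewrite big_cons. move/List.NoDup_cons_iff: Hnd => [Ha Hnd].
case: (excluded_middle_informative (a = i)) => Hai.
- subst a. rewrite sum_zero_list ?addr0 // => j Hj.
  case: (excluded_middle_informative (j = i)) => // Hji; subst j; by [].
- rewrite add0r IH //. case: Hi => // Hai'; by case: Hai.
Qed.

Lemma sum_in (R : pzRingType) (M : lmodType R) (N : M -> Prop) (T : Type)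
  (s : list T) (F : T -> M) :
  N 0 -> (forall a b, N a -> N b -> N (a + b)) ->
  (forall j, List.In j s -> N (F j)) -> N (\sum_(j <- s) F j).
Proof.
move=> N0 ND. elim: s => [|a s IH] H; first by rewrite big_nil.
rewrite big_cons. apply: ND; first by apply: H; left.
apply: IH => j Hj; apply: H; by right.
Qed.

Lemma ann_prime (R : pzRingType) (L : R -> Prop) :
  simple_left_ideal L -> prime_ideal (fun r => forall l, L l -> r * l = 0).
Proof.
case=> [[L0 LD LM] [l0 [Ll0 l0n]] Hs]. split.
- split; first split.
  + move=> l _; exact: mul0r.
  + move=> a b Ha Hb l Hl; by rewrite mulrDl Ha // Hb // addr0.
  + move=> r a Ha l Hl; by rewrite -mulrA Ha // mulr0.
  + move=> r a Ha l Hl; rewrite -mulrA; apply: Ha; exact: LM.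
- move=> H; apply: l0n; by rewrite -(mul1r l0) H.
- move=> a b Hab.
  case: (classic (forall l, L l -> b * l = 0)) => Hb; first by right.
  left. have [l Hl] := not_all_ex_not _ _ Hb.
  have [Ll Hbl] := imply_to_and _ _ Hl.
  pose J := fun y => exists r, y = r * (b * l).
  have JL : is_left_ideal J.
    split.
    + exists 0; by rewrite mul0r.
    + move=> _ _ [r1 ->] [r2 ->]; exists (r1 + r2); by rewrite mulrDl.
    + move=> r _ [r1 ->]; exists (r * r1); by rewrite mulrA.
  have JsubL : forall y, J y -> L y by move=> _ [r ->]; apply: (LM); apply: (LM).
  case: (Hs J JL JsubL) => HJ.
  + exfalso; apply: Hbl. apply: HJ. exists 1; by rewrite mul1r.
  + move=> y Ly. have [r ->] := HJ y Ly. rewrite mulrA mulrA. exact: Hab r l Ll.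
Qed.

Lemma reduced (R : pzRingType) (J : Type) (L : J -> R -> Prop) (s : list J)
  (x : J -> R) :
  (forall j, simple_left_ideal (L j)) -> (forall j, List.In j s -> L j (x j)) ->
  1 = \sum_(j <- s) x j -> two_primal R -> forall a : R, nilpotent_elt a -> a = 0.
Proof.
move=> Hs Hx H1 H2 a Hn. have Hp := proj1 (H2 a) Hn.
rewrite -(mulr1 a) H1 mulr_sumr. apply: sum_zero_list => j Hj.
exact: (Hp _ (ann_prime (Hs j)) (x j) (Hx j Hj)).
Qed.

Lemma idem_central (R : pzRingType) (e : R) :
  (forall a : R, nilpotent_elt a -> a = 0) -> e * e = e -> forall r, e * r = r * e.
Proof.
move=> Hred He r.
have he' : forall z, z * e * e = z * e by move=> z; rewrite -mulrA He.
have h1 : e * r = e * r * e.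
  apply: subr0_eq; apply: Hred; exists 2%N.
  rewrite expr2 mulrBl !mulrBr !mulrA !he'. by rewrite !subrr.
have h2 : r * e = e * r * e.
  apply: subr0_eq; apply: Hred; exists 2%N.
  rewrite expr2 mulrBl !mulrBr !mulrA !he'. by rewrite !subrr.
by rewrite h1 h2.
Qed.

Lemma star (R : pzRingType) (L : R -> Prop) (e : R) :
  simple_left_ideal L -> L e -> (forall r, e * r = r * e) ->
  forall r, e * r = 0 \/ exists b, b * (e * r) = e.
Proof.
case=> [[L0 LD LM] _ Hs] Le Hc r.
pose J := fun y => exists b, y = b * (e * r).
have JL : is_left_ideal J.
  split.
  + exists 0; by rewrite mul0r.
  + move=> _ _ [r1 ->] [r2 ->]; exists (r1 + r2); by rewrite mulrDl.
  + move=> r' _ [r1 ->]; exists (r' * r1); by rewrite mulrA.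
have JsubL : forall y, J y -> L y.
  move=> _ [b ->]; apply: (LM); rewrite Hc; exact: LM.
case: (Hs J JL JsubL) => HJ.
- left. apply: HJ. exists 1; by rewrite mul1r.
- right. have [b Hb] := HJ e Le. by exists b.
Qed.

Lemma pow_lemma (R : pzRingType) (M : lmodType R) (P : M -> Prop) (r : R) :
  (forall (a : R) y, P y -> P (a *: y)) ->
  (forall (r : R) (m : M), P (r *: m) -> P m \/ (forall m' : M, P (r *: m'))) ->
  forall k m, P (r ^+ k *: m) -> P (r *: m).
Proof.
move=> PS Pcp k. elim: k => [|k IH] m H.
- rewrite expr0 scale1r in H. exact: PS.
- rewrite exprS -scalerA in H. case: (Pcp r _ H) => [H'|H']; [exact: IH | exact: H'].
Qed.

Theorem corollary4p24 (R : pzRingType) :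
  semisimple_ring R -> two_primal R -> complete_radical_formula R.
Proof.
move=> [J [L [Hs [Hdec Hind]]]] H2.
have [s [x [Hnd [Hx H1]]]] := Hdec 1.
have Hred := reduced Hs Hx H1 H2.
have Hidem : forall i, List.In i s -> x i * x i = x i.
  move=> i Hi.
  pose y := fun k => x i * x k - (if excluded_middle_informative (k = i) then x i else 0).
  have Hy : forall j, List.In j s -> L j (y j).
    move=> j Hj. have [[L0 LD LM] _ _] := Hs j.
    rewrite /y. case: (excluded_middle_informative (j = i)) => Hji.
    + subst j. apply: (LD); first by apply: (LM); apply: Hx.
      rewrite -mulN1r; apply: (LM); exact: Hx.
    + rewrite subr0; apply: (LM); exact: Hx.
  have Hsum : \sum_(j <- s) y j = 0.
    rewrite /y sumrB -mulr_sumr -H1 mulr1 sum_ind //. exact: subrr.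
  have := Hind s y Hnd Hy Hsum i Hi.
  rewrite /y. destruct (excluded_middle_informative (i = i)) as [E|C].
  + exact: subr0_eq.
  + by case: C.
have Hcent : forall i, List.In i s -> forall r, x i * r = r * x i.
  move=> i Hi; exact: idem_central Hred (Hidem i Hi).
have Hstar : forall i, List.In i s -> forall r, x i * r = 0 \/ exists b, b * (x i * r) = x i.
  move=> i Hi; exact: star (Hs i) (Hx i Hi) (Hcent i Hi).
move=> M N [N0 ND NS] x0; split.
- move=> Hg P [[P0 PD PS] _ Pcp] NP. apply: Hg; first by split.
  move=> _ [r [m [k [-> Hk]]]]. apply: (pow_lemma PS Pcp (k := k)). exact: NP.
- move=> Hb.
  have Nx0 : N x0.
    apply: NNPP => Hn.
    case: (classic (exists i, List.In i s /\ ~ N (x i *: x0))) => [[i [Hi Hni]] | Hall].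
    + apply Hni. apply: (Hb (fun m => N (x i *: m))).
      * split.
        -- split.
           ++ by rewrite scaler0.
           ++ move=> a b Ha Hb'; rewrite scalerDr; exact: ND.
           ++ move=> r a Ha; rewrite scalerA Hcent // -scalerA; exact: NS.
        -- exists 1, x0. rewrite scale1r; exact: Hni.
        -- move=> r m Hrm. case: (Hstar i Hi r) => [Hz|[b Hb']].
           ++ right => m'. by rewrite scalerA Hz scale0r.
           ++ left. rewrite -Hb' -scalerA -scalerA. exact: NS.
      * move=> y Ny. exact: NS.
    + apply: Hn. rewrite -[x0]scale1r H1 scaler_suml. apply: sum_in => // j Hj.
      apply: NNPP => Hnj. apply: Hall. by exists j.
  move=> N' HN' HE. apply: HE. exists 1, x0, 0%N. by rewrite expr0 !scale1r.
Qed.
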